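(* Let $i:B\to A$ be a $k$-linear $X$-functor from a diagonal $k$-linear category $B$ to a $k$-linear category $A$, and assume that $A_{xy}$ is flat as a left $B_x$-module for all $x,y\in X$. Then the following are equivalent: (1) $A_{xx}$ is faithfully flat as a left $B_x$-module for every $x\in X$; (2) the adjoint pair $(F,G)$ between $\mathcal{D}_k(X)_B$ and $\underline{\rm Desc}_B(A)$ is a pair of inverse equivalences, where $F(N)_{xy}=N_x\otimes_{B_x}A_{xy}$ with $\sigma_{xy}(n\otimes_{B_x}a)=n\otimes_{B_x}1_x\otimes_{B_x}a$ and $G(M,\sigma)_x=\{m\in M_{xx}\mid\sigma_{xx}(m)=m\otimes_{B_x}1_x\}$ (unit $n\mapsto n\otimes_{B_x}1_x$, counit $m\otimes_{B_x}a\mapsto ma$).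
   Context: Let $k$ be a commutative ring; unadorned $\otimes$ is over $k$. A $k$-linear category $A$ with class of objects $X$ consists of $k$-modules $A_{xy}$, associative compositions $A_{xy}\otimes A_{yz}\to A_{xz}$, $a\otimes b\mapsto ab$, and units $1_x\in A_{xx}$. A right $A$-module is a family $(M_{xy})$ with maps $M_{xy}\otimes A_{yz}\to M_{xz}$, associative and unital. A diagonal $k$-linear category $B$ is a family of $k$-algebras $(B_x)_{x\in X}$. $\mathcal{D}_k(X)_B$ is the category of families $N=(N_x)$ with $N_x$ a right $B_x$-module (morphisms: families of $B_x$-linear maps). A $k$-linear $X$-functor $i:B\to A$ amounts to $k$-algebra morphisms $i_x:B_x\to A_{xx}$, making $A_{xy}$ a $B_x$-$B_y$-bimodule. A descent datum $(M,\sigma)$ for $i$ is a right $A$-module $M$ with $k$-linear maps $\sigma_{xy}:M_{xy}\to M_{xx}\otimes_{B_x}A_{xy}$, $\sigma_{xy}(m)=m_{<0>}\otimes_{B_x}m_{<1>}$, such that for all $m\in M_{xy}$, $a\in A_{yz}$: (i) $\sigma_{xz}(ma)=m_{<0>}\otimes_{B_x}m_{<1>}a$; (ii) $\sigma_{xx}(m_{<0>})\otimes_{B_x}m_{<1>}=m_{<0>}\otimes_{B_x}1_x\otimes_{B_x}m_{<1>}$; (iii) $m_{<0>}m_{<1>}=m$. A morphism of descent data $f:(M,\sigma)\to(M',\sigma')$ is a morphism of right $A$-modules with $f_{xx}(m_{<0>})\otimes_{B_x}m_{<1>}=\sigma'_{xy}(f_{xy}(m))$. $\underline{\rm Desc}_B(A)$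 is the category of descent data. $F$ and $G$ act on morphisms by $F(g)_{xy}=g_x\otimes_{B_x}A_{xy}$ and $G(f)_x=f_{xx}$ restricted. *)

(* Defs.v *)
(* MathComp has no tensor products of modules over noncommutative rings, so we
   build N (x)_R L here as the quotient of formal sums (lists of pairs) by the
   congruence generated by the usual bilinearity / balancing relations.
   The quotient is realised classically (classes = predicates on lists), so
   that every operation below is a plain definition (no proof obligations). *)
From HB Require Import structures.
From mathcomp Require Import all_boot all_algebra.
From Stdlib Require Import ClassicalEpsilon Permutation.
Set Implicit Arguments. Unset Strict Implicit. Unset Printing Implicit Defensive.
Import GRing.Theory.
Local Open Scope ring_scope.

Section Defs.
Variable k : comPzRingType.

Record rawmod := RawMod {
  rcar :> Type;
  radd : rcar -> rcar -> rcar;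
  rzero : rcar;
  rscale : k -> rcar -> rcar }.

Definition of_lmod (V : lmodType k) : rawmod :=
  @RawMod (V : Type) (@GRing.add V) (0 : V) (@GRing.scale k V).

Definition klinear (U V : lmodType k) (f : U -> V) : Prop :=
  forall (c : k) (u v : U), f (c *: u + v) = c *: f u + f v.

Record kalg := KAlg {
  acar :> lmodType k;
  amul : acar -> acar -> acar;
  aone : acar;
  amulA : forall a b c, amul a (amul b c) = amul (amul a b) c;
  amul1l : forall a, amul aone a = a;
  amul1r : forall a, amul a aone = a;
  amul_linl : forall b, klinear (fun a => amul a b);
  amul_linr : forall a, klinear (amul a) }.

Record kcat (X : Type) := KCat {
  Hom : X -> X -> lmodType k;
  comp : forall x y z, Hom x y -> Hom y z -> Hom x z;
  idm : forall x, Hom x x;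
  compA : forall x y z w (a : Hom x y) (b : Hom y z) (c : Hom z w),
      comp a (comp b c) = comp (comp a b) c;
  comp1l : forall x y (a : Hom x y), comp (idm x) a = a;
  comp1r : forall x y (a : Hom x y), comp a (idm y) = a;
  comp_linl : forall x y z (b : Hom y z), klinear (fun a : Hom x y => comp a b);
  comp_linr : forall x y z (a : Hom x y), klinear (fun b : Hom y z => comp a b) }.
Arguments comp {X} _ {x y z}.
Arguments idm {X} _ x.
Arguments Hom {X} _ x y.

(* a diagonal k-linear category B is a family (B x)_{x in X} of k-algebras;
   a k-linear X-functor i : B -> A is a family of algebra maps B_x -> A_xx *)
Record kXfunctor (X : Type) (B : X -> kalg) (A : kcat X) := KXFunctor {
  ifun : forall x, B x -> Hom A x x;
  ifun_lin : forall x, klinear (@ifun x);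
  ifun_mul : forall x (a b : B x), @ifun x (amul a b) = comp A (@ifun x a) (@ifun x b);
  ifun_one : forall x, @ifun x (aone (B x)) = idm A x }.
Arguments ifun {X B A} _ x.

(* right modules over a k-algebra (objects N_x of D_k(X)_B) *)
Record rmodule (R : kalg) := RModule {
  rmc :> lmodType k;
  rma : rmc -> R -> rmc;
  rma_linl : forall r, klinear (fun m => rma m r);
  rma_linr : forall m, klinear (rma m);
  rmaA : forall m r s, rma (rma m r) s = rma m (amul r s);
  rma1 : forall m, rma m (aone R) = m }.
Arguments rma {R} _.

Definition rmod_hom (R : kalg) (N N' : rmodule R) (f : N -> N') : Prop :=
  klinear f /\ forall n r, f (rma N n r) = rma N' (f n) r.

Record rAmodule (X : Type) (A : kcat X) := RAModule {
  Mc : X -> X -> lmodType k;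
  Ma : forall x y z, Mc x y -> Hom A y z -> Mc x z;
  Ma_linl : forall x y z (a : Hom A y z), klinear (fun m : Mc x y => Ma m a);
  Ma_linr : forall x y z (m : Mc x y), klinear (fun a : Hom A y z => Ma m a);
  MaA : forall x y z w (m : Mc x y) (a : Hom A y z) (b : Hom A z w),
      Ma (Ma m a) b = Ma m (comp A a b);
  Ma1 : forall x y (m : Mc x y), Ma m (idm A y) = m }.
Arguments Mc {X A} _ x y.
Arguments Ma {X A} _ {x y z}.

(* Tensor products  N (x)_R L  of a right "R-module" N and a left       *)
(* "R-module" L; optionally restricted to the elements of N satisfying  *)
(* a predicate P (used for tensoring a submodule, e.g. G(M)_x).         *)
Record tdata := TData {
  tN : rawmod;
  tL : rawmod;
  tR : Type;
  tra : tN -> tR -> tN;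
  tla : tR -> tL -> tL;
  tP : tN -> Prop }.

Section Tensor.
Variable D : tdata.
Local Notation N := (tN D).
Local Notation L := (tL D).
Local Notation P := (@tP D).

Inductive tequiv : seq (N * L) -> seq (N * L) -> Prop :=
| te_refl s : tequiv s s
| te_sym s t : tequiv s t -> tequiv t s
| te_trans s t u : tequiv s t -> tequiv t u -> tequiv s u
| te_perm s t : Permutation s t -> tequiv s t
| te_cat s s' t t' : tequiv s s' -> tequiv t t' -> tequiv (s ++ t) (s' ++ t')
| te_addl n n' l : P n -> P n' ->
    tequiv [:: (radd n n', l)] [:: (n, l); (n', l)]
| te_addr n l l' : P n -> tequiv [:: (n, radd l l')] [:: (n, l); (n, l')]
| te_zerol l : P (rzero N) -> tequiv [:: (rzero N, l)] [::]
| te_zeror n : P n -> tequiv [:: (n, rzero L)] [::]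
| te_bal n r l : P n -> P (@tra D n r) -> tequiv [:: (@tra D n r, l)] [:: (n, @tla D r l)].

Definition tadm (s : seq (N * L)) : Prop := List.Forall (fun p => P p.1) s.

Definition tensor : Type :=
  {C : seq (N * L) -> Prop | exists s, tadm s /\ C = tequiv s}.

Definition tcls (s : seq (N * L)) : tensor :=
  match excluded_middle_informative (tadm s) with
  | left h => exist _ (tequiv s) (ex_intro _ s (conj h erefl))
  | right _ => exist _ (tequiv [::])
                 (ex_intro _ [::] (conj (List.Forall_nil _) erefl))
  end.

Definition trep (t : tensor) : seq (N * L) :=
  proj1_sig (constructive_indefinite_description _ (proj2_sig t)).

Definition tmul (n : N) (l : L) : tensor := tcls [:: (n, l)].
Definition tadd (t u : tensor) : tensor := tcls (trep t ++ trep u).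
Definition tzero : tensor := tcls [::].
Definition tscale (c : k) (t : tensor) : tensor :=
  tcls (map (fun p => (rscale c p.1, p.2)) (trep t)).

Definition tensor_raw : rawmod := @RawMod tensor tadd tzero tscale.

(* the additive map N (x) L -> Z induced by a balanced biadditive phi *)
Definition tlift (Z : rawmod) (phi : N -> L -> Z) (t : tensor) : Z :=
  foldr (fun p z => radd (phi p.1 p.2) z) (rzero Z) (trep t).

Definition tract (S : Type) (rho : L -> S -> L) (t : tensor) (s : S) : tensor :=
  tcls (map (fun p => (p.1, rho p.2 s)) (trep t)).
End Tensor.
Arguments tcls : clear implicits.

Definition tmap (D D' : tdata) (f : tN D -> tN D') (g : tL D -> tL D')
    (t : tensor D) : tensor D' :=
  tcls D' (map (fun p => (f p.1, g p.2)) (trep t)).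

Definition exact3 (U V W : rawmod) (f : U -> V) (g : V -> W) : Prop :=
  forall v, g v = rzero W <-> exists u, f u = v.

Definition tdRL (R : kalg) (N : rmodule R) (L : lmodType k) (la : R -> L -> L)
  : tdata := @TData (of_lmod N) (of_lmod L) R (rma N) la (fun _ => True).

Definition flat_left (R : kalg) (L : lmodType k) (la : R -> L -> L) : Prop :=
  forall (N1 N2 N3 : rmodule R) (f : N1 -> N2) (g : N2 -> N3),
    rmod_hom f -> rmod_hom g ->
    @exact3 (of_lmod N1) (of_lmod N2) (of_lmod N3) f g ->
    @exact3 (tensor_raw (tdRL N1 la)) (tensor_raw (tdRL N2 la))
            (tensor_raw (tdRL N3 la))
      (@tmap (tdRL N1 la) (tdRL N2 la) f id)
      (@tmap (tdRL N2 la) (tdRL N3 la) g id).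

Definition faithfully_flat_left (R : kalg) (L : lmodType k) (la : R -> L -> L)
  : Prop :=
  forall (N1 N2 N3 : rmodule R) (f : N1 -> N2) (g : N2 -> N3),
    rmod_hom f -> rmod_hom g ->
    (@exact3 (of_lmod N1) (of_lmod N2) (of_lmod N3) f g <->
     @exact3 (tensor_raw (tdRL N1 la)) (tensor_raw (tdRL N2 la))
             (tensor_raw (tdRL N3 la))
       (@tmap (tdRL N1 la) (tdRL N2 la) f id)
       (@tmap (tdRL N2 la) (tdRL N3 la) g id)).

Section Descent.
Local Unset Implicit Arguments.
Variables (X : Type) (B : X -> kalg) (A : kcat X) (i : kXfunctor B A).

Definition ila (x y : X) (b : B x) (a : Hom A x y) : Hom A x y :=
  comp A (ifun i x b) a.

Definition tdA (x y : X) (V : rawmod) (rho : V -> B x -> V) (P : V -> Prop)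
  : tdata := @TData V (of_lmod (Hom A x y)) (B x) rho (@ila x y) P.

Definition tdA_ract (x : X) (V : rawmod) (rho : V -> B x -> V)
  (t : tensor (tdA x x V rho (fun _ => True))) (b : B x)
  : tensor (tdA x x V rho (fun _ => True)) :=
  @tract (tdA x x V rho (fun _ => True)) (B x)
    (fun (a : Hom A x x) b => comp A a (ifun i x b)) t b.

Definition tdAA (x y : X) (V : rawmod) (rho : V -> B x -> V) : tdata :=
  @tdA x y (tensor_raw (tdA x x V rho (fun _ => True))) (@tdA_ract x V rho)
    (fun _ => True).

Section OnM.
Variable M : rAmodule A.
Definition Mrho (x : X) (m : Mc M x x) (b : B x) : Mc M x x := Ma M m (ifun i x b).

Definition tdM (x y : X) : tdata := @tdA x y (of_lmod (Mc M x x)) (@Mrho x) (fun _ => True).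
Definition tdMM (x y : X) : tdata := @tdAA x y (of_lmod (Mc M x x)) (@Mrho x).

Definition is_descent (sigma : forall x y, Mc M x y -> tensor (tdM x y)) : Prop :=
  [/\
      (forall x y (c : k) (m m' : Mc M x y),
          sigma x y (c *: m + m') =
          tadd (tscale c (sigma x y m)) (sigma x y m')),
      (forall x y z (m : Mc M x y) (a : Hom A y z),
          sigma x z (Ma M m a) =
          @tmap (tdM x y) (tdM x z) id (fun a' => comp A a' a) (sigma x y m)),
      (forall x y (m : Mc M x y),
          @tmap (tdM x y) (tdMM x y) (sigma x x) id (sigma x y m) =
          @tmap (tdM x y) (tdMM x y) (fun m0 => @tmul (tdM x x) m0 (idm A x)) id
                (sigma x y m)) &
      (forall x y (m : Mc M x y),
          @tlift (tdM x y) (of_lmod (Mc M x y)) (fun m0 a => Ma M m0 a)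
                 (sigma x y m) = m)].

Definition Gpred (sigma : forall x y, Mc M x y -> tensor (tdM x y)) (x : X)
  (m : Mc M x x) : Prop :=
  sigma x x m = @tmul (tdM x x) m (idm A x).

Definition tdFG (sigma : forall x y, Mc M x y -> tensor (tdM x y)) (x y : X)
  : tdata := @tdA x y (of_lmod (Mc M x x)) (@Mrho x) (Gpred sigma x).

Definition counit (sigma : forall x y, Mc M x y -> tensor (tdM x y)) (x y : X)
  : tensor (tdFG sigma x y) -> Mc M x y :=
  @tlift (tdFG sigma x y) (of_lmod (Mc M x y)) (fun m a => Ma M m a).

Definition counit_iso (sigma : forall x y, Mc M x y -> tensor (tdM x y)) : Prop :=
  forall x y, bijective (counit sigma x y).
End OnM.

Section OnN.
Variable N : forall x, rmodule (B x).
Definition tdN (x y : X) : tdata := @tdA x y (of_lmod (N x)) (rma (N x)) (fun _ => True).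
Definition tdNN (x y : X) : tdata := @tdAA x y (of_lmod (N x)) (rma (N x)).

Definition sigmaF (x y : X) : tensor (tdN x y) -> tensor (tdNN x y) :=
  @tmap (tdN x y) (tdNN x y) (fun n => @tmul (tdN x x) n (idm A x)) id.

Definition GFpred (x : X) (t : tensor (tdN x x)) : Prop :=
  sigmaF x x t = @tmul (tdNN x x) t (idm A x).

Definition unit_map (x : X) (n : N x) : tensor (tdN x x) :=
  @tmul (tdN x x) n (idm A x).

Definition unit_iso : Prop :=
  forall x, injective (unit_map x) /\
            (forall t, GFpred x t <-> exists n, unit_map x n = t).
End OnN.
End Descent.
End Defs.
Arguments ila {k X B A} i x y.
Arguments tdM {k X B A} i M x y.
Arguments is_descent {k X B A} i M sigma.
Arguments counit_iso {k X B A} i M sigma.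
Arguments unit_iso {k X B A} i N.

(* Main.v *)
Require Import Defs.
From HB Require Import structures.
From mathcomp Require Import all_boot all_algebra.
From mathcomp Require Import boolp.
From Stdlib Require Import ClassicalEpsilon Permutation ProofIrrelevance
  FunctionalExtensionality PropExtensionality.
Set Implicit Arguments. Unset Strict Implicit. Unset Printing Implicit Defensive.
Import GRing.Theory.
Local Open Scope ring_scope.

Section T.
Variable k : comPzRingType.
Variable D : tdata k.
Local Notation N := (tN D).
Local Notation L := (tL D).
Local Notation P := (@tP k D).

Lemma tsig_eq (t u : tensor D) : proj1_sig t = proj1_sig u -> t = u.
Proof.
case: t => C hC; case: u => C' hC' /= e; subst C'.
by rewrite (proof_irrelevance _ hC hC').
Qed.

Lemma tadm_cat s t : tadm (D:=D) s -> tadm (D:=D) t -> tadm (D:=D) (s ++ t).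
Proof. by move=> h1 h2; apply/List.Forall_app. Qed.

Lemma tadm_catl s t : tadm (D:=D) (s ++ t) -> tadm (D:=D) s /\ tadm (D:=D) t.
Proof. by move=> h; apply/List.Forall_app. Qed.

Lemma tcls_def s (h : tadm (D:=D) s) : proj1_sig (@tcls k D s) = @tequiv k D s.
Proof. by rewrite /tcls; case: excluded_middle_informative. Qed.

Lemma tcls_eq s t : tadm (D:=D) s -> tadm (D:=D) t -> tequiv s t -> @tcls k D s = @tcls k D t.
Proof.
move=> hs ht e; apply: tsig_eq; rewrite !tcls_def //.
apply: functional_extensionality => u; apply: propositional_extensionality.
split=> h; [apply: te_trans h; exact: te_sym | exact: te_trans h].
Qed.

Lemma tcls_inv s t : tadm (D:=D) s -> tadm (D:=D) t -> @tcls k D s = @tcls k D t -> tequiv s t.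
Proof.
move=> hs ht e; have := f_equal (@proj1_sig _ _) e; rewrite !tcls_def // => e'.
have : @tequiv k D t t by apply: te_refl.
by rewrite -e'.
Qed.

Lemma trepP t : tadm (D:=D) (trep t) /\ proj1_sig t = tequiv (trep t).
Proof.
rewrite /trep; case: constructive_indefinite_description => s /= [h e].
by split.
Qed.

Lemma tadm_trep t : tadm (D:=D) (trep t). Proof. by case: (trepP t). Qed.

Lemma tcls_trep t : @tcls k D (trep t) = t.
Proof.
apply: tsig_eq; rewrite tcls_def; last exact: tadm_trep.
by case: (trepP t).
Qed.

Lemma trep_tcls s : tadm (D:=D) s -> tequiv (trep (@tcls k D s)) s.
Proof.
move=> h; apply: tcls_inv => //; first exact: tadm_trep.
by rewrite tcls_trep.
Qed.

Lemma tensor_cls (t : tensor D) : exists s, tadm (D:=D) s /\ t = @tcls k D s.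
Proof. by exists (trep t); split; [exact: tadm_trep | rewrite tcls_trep]. Qed.

Lemma tadd_cls s t : tadm (D:=D) s -> tadm (D:=D) t ->
  tadd (@tcls k D s) (@tcls k D t) = @tcls k D (s ++ t).
Proof.
move=> hs ht; rewrite /tadd; apply: tcls_eq.
- by apply: tadm_cat; apply: tadm_trep.
- exact: tadm_cat.
- by apply: te_cat; apply: trep_tcls.
Qed.

Lemma tadm_cons p s : tadm (D:=D) (p :: s) <-> P p.1 /\ tadm (D:=D) s.
Proof. by split; [move=> h; inversion h | case=> *; constructor]. Qed.

Lemma tcls_cons p s : tadm (D:=D) (p :: s) ->
  @tcls k D (p :: s) = tadd (tmul p.1 p.2) (@tcls k D s).
Proof.
case/tadm_cons=> hp hs; rewrite /tmul tadd_cls //; first by case: p hp.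
by apply/tadm_cons; split=> //; constructor.
Qed.

Lemma tensor_ind (Q : tensor D -> Prop) :
  Q (tzero D) -> (forall n l, P n -> Q (tmul n l)) ->
  (forall t u, Q t -> Q u -> Q (tadd t u)) -> forall t, Q t.
Proof.
move=> h0 h1 h2 t; have [s [hs ->]] := tensor_cls t.
elim: s hs => [|p s IH] hs; first exact: h0.
rewrite tcls_cons //; case/tadm_cons: hs => hp hs.
by apply: h2; [apply: h1 | apply: IH].
Qed.
End T.

Section Map.
Variable k : comPzRingType.
Variables D D' : tdata k.
Variable rho : tR D -> tR D'.
Variables (f : tN D -> tN D') (g : tL D -> tL D').
Hypotheses
  (fD : forall n n', tP n -> tP n' -> f (radd n n') = radd (f n) (f n'))
  (f0 : tP (rzero (tN D)) -> f (rzero _) = rzero _)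
  (fP : forall n, tP n -> tP (f n))
  (fra : forall n r, tP n -> tP (tra n r) -> f (tra n r) = tra (f n) (rho r))
  (gD : forall l l', g (radd l l') = radd (g l) (g l'))
  (g0 : g (rzero _) = rzero _)
  (gla : forall r l, g (tla r l) = tla (rho r) (g l)).

Let h (p : tN D * tL D) : tN D' * tL D' := (f p.1, g p.2).

Lemma map_tequiv s t : tequiv s t -> tequiv (map h s) (map h t).
Proof.
elim=> {s t}.
- by move=> s; apply: te_refl.
- by move=> s t _ IH; apply: te_sym.
- by move=> s t u _ IH1 _ IH2; apply: te_trans IH2.
- by move=> s t pst; apply: te_perm; apply: Permutation_map.
- by move=> s s' t t' _ IH1 _ IH2; rewrite !map_cat; apply: te_cat.
- move=> n n' l hn hn'; rewrite /= /h /= fD //; exact: te_addl (fP hn) (fP hn').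
- move=> n l l' hn; rewrite /= /h /= gD; exact: te_addr (fP hn).
- move=> l h0; rewrite /= /h /= f0 //; apply: te_zerol.
  by rewrite -f0 //; apply: fP.
- move=> n hn; rewrite /= /h /= g0; exact: te_zeror (fP hn).
- move=> n r l hn hnr; rewrite /= /h /= fra // gla; apply: te_bal; first exact: fP.
  by rewrite -fra //; apply: fP.
Qed.

Lemma tadm_map s : tadm s -> tadm (map h s).
Proof.
elim: s => [|p s IH] hs; first by constructor.
have [hp hs'] := (tadm_cons p s).1 hs.
apply/tadm_cons; split; last exact: IH.
exact: fP.
Qed.

Lemma tmap_cls s : tadm s -> tmap f g (tcls s) = tcls (map h s).
Proof.
move=> hs; rewrite /tmap; apply: tcls_eq.
- by apply: tadm_map; apply: tadm_trep.
- exact: tadm_map.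
- by apply: map_tequiv; apply: trep_tcls.
Qed.

Lemma tmap_add t u : tmap f g (tadd t u) = tadd (tmap f g t) (tmap f g u).
Proof.
have [s [hs ->]] := tensor_cls t; have [s' [hs' ->]] := tensor_cls u.
rewrite tadd_cls // !tmap_cls //; last exact: tadm_cat.
by rewrite tadd_cls ?map_cat //; apply: tadm_map.
Qed.

Lemma tmap_mul n l : tP n -> tmap f g (tmul n l) = tmul (f n) (g l).
Proof.
by move=> hn; rewrite /tmul tmap_cls //; apply/tadm_cons; split=> //; constructor.
Qed.

Lemma tmap_zero : tmap f g (tzero D) = tzero D'.
Proof. by rewrite /tzero tmap_cls //; constructor. Qed.
End Map.

Section Lift.
Variable k : comPzRingType.
Variable D : tdata k.
Variable V : lmodType k.
Variable phi : tN D -> tL D -> V.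
Hypotheses
  (pDl : forall n n' l, tP n -> tP n' -> phi (radd n n') l = phi n l + phi n' l)
  (pDr : forall n l l', tP n -> phi n (radd l l') = phi n l + phi n l')
  (p0l : forall l, tP (rzero (tN D)) -> phi (rzero _) l = 0)
  (p0r : forall n, tP n -> phi n (rzero _) = 0)
  (pbal : forall n r l, tP n -> tP (tra n r) -> phi (tra n r) l = phi n (tla r l)).

Let sumv (s : seq (tN D * tL D)) : V := foldr (fun p z => phi p.1 p.2 + z) 0 s.

Lemma sumv_cat s t : sumv (s ++ t) = sumv s + sumv t.
Proof. by elim: s => [|p s IH] /=; rewrite ?add0r // IH addrA. Qed.

Lemma sumv_perm s t : Permutation s t -> sumv s = sumv t.
Proof.
elim=> {s t} //=.
- by move=> p s t _ ->.
- by move=> p q s; rewrite !addrA (addrC (phi q.1 q.2)).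
- by move=> s t u _ -> _ ->.
Qed.

Lemma sumv_tequiv s t : tequiv s t -> sumv s = sumv t.
Proof.
elim=> {s t} //=.
- by move=> s t u _ -> _ ->.
- exact: sumv_perm.
- by move=> s s' t t' _ e1 _ e2; rewrite !sumv_cat e1 e2.
- by move=> n n' l hn hn'; rewrite pDl // !addr0.
- by move=> n l l' hn; rewrite pDr // !addr0.
- by move=> l h0; rewrite p0l // addr0.
- by move=> n hn; rewrite p0r // addr0.
- by move=> n r l hn hnr; rewrite pbal.
Qed.

Lemma tlift_cls s : tadm s -> tlift (Z:=of_lmod V) phi (tcls s) = sumv s.
Proof.
move=> hs; rewrite /tlift; apply: sumv_tequiv; exact: trep_tcls.
Qed.

Lemma tlift_add t u : tlift (Z:=of_lmod V) phi (tadd t u) =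
  tlift (Z:=of_lmod V) phi t + tlift (Z:=of_lmod V) phi u.
Proof.
have [s [hs ->]] := tensor_cls t; have [s' [hs' ->]] := tensor_cls u.
by rewrite tadd_cls // !tlift_cls ?sumv_cat //; apply: tadm_cat.
Qed.

Lemma tlift_mul n l : tP n -> tlift (Z:=of_lmod V) phi (tmul n l) = phi n l.
Proof.
move=> hn; rewrite /tmul tlift_cls /= ?addr0 //.
by apply/tadm_cons; split=> //; constructor.
Qed.

Lemma tlift_zero : tlift (Z:=of_lmod V) phi (tzero D) = 0.
Proof. by rewrite /tzero tlift_cls //; constructor. Qed.
End Lift.

Section Rel.
Variable k : comPzRingType.
Variable D : tdata k.

Lemma tadm1 n l : tP n -> tadm (D:=D) [:: (n, l)].
Proof. by move=> hn; apply/tadm_cons; split=> //; constructor. Qed.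

Lemma tadm2 n n' l l' : tP n -> tP n' -> tadm (D:=D) [:: (n, l); (n', l')].
Proof. by move=> hn hn'; apply/tadm_cons; split=> //; apply: tadm1. Qed.

Lemma tmul_addl n n' l : tP n -> tP n' -> tP (radd n n') ->
  tmul (radd n n') l = tadd (tmul (D:=D) n l) (tmul n' l).
Proof.
move=> hn hn' hnn; rewrite /tmul tadd_cls; [|exact: tadm1|exact: tadm1].
apply: tcls_eq; [exact: tadm1 | exact: tadm2 | exact: te_addl].
Qed.

Lemma tmul_addr' n l l' : tP n ->
  tmul n (radd l l') = tadd (tmul (D:=D) n l) (tmul n l').
Proof.
move=> hn; rewrite /tmul tadd_cls; [|exact: tadm1|exact: tadm1].
apply: tcls_eq; [exact: tadm1 | exact: tadm2 | exact: te_addr].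
Qed.

Lemma tmul_zerol l : tP (rzero (tN D)) -> tmul (D:=D) (rzero _) l = tzero D.
Proof. by move=> h; apply: tcls_eq; [exact: tadm1 | constructor | exact: te_zerol]. Qed.

Lemma tmul_zeror n : tP n -> tmul (D:=D) n (rzero _) = tzero D.
Proof. by move=> h; apply: tcls_eq; [exact: tadm1 | constructor | exact: te_zeror]. Qed.

Lemma tmul_bal n r l : tP n -> tP (tra n r) ->
  tmul (D:=D) (tra n r) l = tmul n (tla r l).
Proof. by move=> h h'; apply: tcls_eq; [exact: tadm1 | exact: tadm1 | exact: te_bal]. Qed.

Lemma tadd_zero (t : tensor D) : tadd t (tzero D) = t.
Proof.
have [s [hs ->]] := tensor_cls t; rewrite /tzero tadd_cls ?cats0 //; constructor.
Qed.

Lemma tzero_add (t : tensor D) : tadd (tzero D) t = t.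
Proof.
have [s [hs ->]] := tensor_cls t; rewrite /tzero tadd_cls //; constructor.
Qed.

Lemma taddA (t u w : tensor D) : tadd t (tadd u w) = tadd (tadd t u) w.
Proof.
have [s [hs ->]] := tensor_cls t; have [s' [hs' ->]] := tensor_cls u.
have [s'' [hs'' ->]] := tensor_cls w.
by rewrite !tadd_cls ?catA //; apply: tadm_cat.
Qed.

Lemma taddC (t u : tensor D) : tadd t u = tadd u t.
Proof.
have [s [hs ->]] := tensor_cls t; have [s' [hs' ->]] := tensor_cls u.
rewrite !tadd_cls //; apply: tcls_eq; try exact: tadm_cat.
by apply: te_perm; apply: Permutation_app_comm.
Qed.
End Rel.

Record thom (k : comPzRingType) (D D' : tdata k) (rho : tR D -> tR D')
  (f : tN D -> tN D') (g : tL D -> tL D') : Prop := THom {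
  th_fD : forall n n', tP n -> tP n' -> f (radd n n') = radd (f n) (f n');
  th_f0 : tP (rzero (tN D)) -> f (rzero _) = rzero _;
  th_fP : forall n, tP n -> tP (f n);
  th_fra : forall n r, tP n -> tP (tra n r) -> f (tra n r) = tra (f n) (rho r);
  th_gD : forall l l', g (radd l l') = radd (g l) (g l');
  th_g0 : g (rzero _) = rzero _;
  th_gla : forall r l, g (tla r l) = tla (rho r) (g l) }.

Section ThomLemmas.
Variable k : comPzRingType.
Variables (D D' : tdata k) (rho : tR D -> tR D') (f : tN D -> tN D') (g : tL D -> tL D').
Hypothesis H : thom rho f g.

Lemma tmapD t u : tmap f g (tadd t u) = tadd (tmap f g t) (tmap f g u).
Proof. case: H => a b c d e f' g'; exact: (tmap_add a b c d e f' g'). Qed.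
Lemma tmapM n l : tP n -> tmap (D':=D') f g (tmul n l) = tmul (f n) (g l).
Proof. case: H => a b c d e f' g'; exact: (tmap_mul a b c d e f' g'). Qed.
Lemma tmap0 : tmap (D':=D') f g (tzero D) = tzero D'.
Proof. case: H => a b c d e f' g'; exact: (tmap_zero a b c d e f' g'). Qed.
Lemma tmapC s : tadm s -> tmap (D':=D') f g (tcls s) = tcls (map (fun p => (f p.1, g p.2)) s).
Proof. case: H => a b c d e f' g'; exact: (tmap_cls a b c d e f' g'). Qed.
End ThomLemmas.

Lemma thom_comp (k : comPzRingType) (D1 D2 D3 : tdata k) rho1 rho2 f1 g1 f2 g2 :
  @thom k D1 D2 rho1 f1 g1 -> @thom k D2 D3 rho2 f2 g2 ->
  thom (rho2 \o rho1) (f2 \o f1) (g2 \o g1).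
Proof.
case=> a1 b1 c1 d1 e1 h1 i1 [a2 b2 c2 d2 e2 h2 i2]; split=> /=.
- by move=> n n' hn hn'; rewrite a1 // a2 //; apply: c1.
- by move=> h0; rewrite b1 // b2 //; rewrite -b1 //; apply: c1.
- by move=> n hn; apply: c2; apply: c1.
- by move=> n r hn hnr; rewrite d1 // d2 //; [apply: c1 | rewrite -d1 //; apply: c1].
- by move=> l l'; rewrite e1 e2.
- by rewrite h1 h2.
- by move=> r l; rewrite i1 i2.
Qed.

Lemma tmap_comp (k : comPzRingType) (D1 D2 D3 : tdata k) rho1 rho2 f1 g1 f2 g2 t :
  @thom k D1 D2 rho1 f1 g1 -> @thom k D2 D3 rho2 f2 g2 ->
  tmap f2 g2 (tmap f1 g1 t) = tmap (f2 \o f1) (g2 \o g1) t.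
Proof.
move=> H1 H2; have H3 := thom_comp H1 H2.
have [s [hs ->]] := tensor_cls t.
rewrite (tmapC H1) // (tmapC H2); last by case: H1 => a b c d e f' g'; apply: (tadm_map _ c).
by rewrite (tmapC H3) // -map_comp.
Qed.

Lemma tmap_ext (k : comPzRingType) (D D' : tdata k) rho f g f' g' t :
  @thom k D D' rho f g -> (forall n, tP n -> f n = f' n) -> g =1 g' ->
  tmap f g t = tmap f' g' t.
Proof.
move=> H ef eg; have [s [hs ->]] := tensor_cls t.
rewrite /tmap; congr tcls; apply: List.map_ext_in => p hin.
suff : tP p.1 by move=> hp; rewrite ef // eg.
have := tadm_trep (tcls s); rewrite /tadm List.Forall_forall; exact.
Qed.

Record Ngood (k : comPzRingType) (D : tdata k) : Prop := NGood {
  ngD : forall c (n n' : tN D), rscale c (radd n n') = radd (rscale c n) (rscale c n');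
  ng0 : forall c, rscale c (rzero (tN D)) = rzero _;
  ngra : forall c (n : tN D) r, rscale c (tra n r) = tra (rscale c n) r;
  ngM : forall a b (n : tN D), rscale a (rscale b n) = rscale (a * b) n;
  ng1 : forall (n : tN D), rscale 1 n = n;
  ngDl : forall a b (n : tN D), rscale (a + b) n = radd (rscale a n) (rscale b n);
  ngN : forall (n : tN D), radd (rscale (-1) n) n = rzero (tN D);
  ngP0 : tP (rzero (tN D));
  ngPD : forall (n n' : tN D), tP n -> tP n' -> tP (radd n n');
  ngPZ : forall c (n : tN D), tP n -> tP (rscale c n) }.

Definition Tens (k : comPzRingType) (D : tdata k) (_ : Ngood D) : Type := tensor D.

Section TensLmod.
Variable k : comPzRingType.
Variable D : tdata k.
Hypothesis hD : Ngood D.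

Lemma thom_scale c : thom (D:=D) (D':=D) id (rscale c) id.
Proof.
case: hD => *; split=> //; auto.
Qed.

Lemma tscale_cls c (s : seq (tN D * tL D)) : tadm s ->
  tscale c (tcls s) = tcls (map (fun p => (rscale c p.1, p.2)) s).
Proof. exact: (tmapC (thom_scale c)). Qed.

Lemma tscale_mul c (n : tN D) (l : tL D) : tP n -> tscale c (tmul (D:=D) n l) = tmul (rscale c n) l.
Proof. exact: (tmapM (thom_scale c)). Qed.

Lemma tscale_add c (t u : tensor D) : tscale c (tadd t u) = tadd (tscale c t) (tscale (D:=D) c u).
Proof. exact: (tmapD (thom_scale c)). Qed.

Lemma tscale_zero c : tscale c (tzero D) = tzero D.
Proof. exact: (tmap0 (thom_scale c)). Qed.

Lemma tadm_scale c (s : seq (tN D * tL D)) : tadm (D:=D) s -> tadm (map (fun p => (rscale c p.1, p.2)) s).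
Proof. move=> h; exact: (tadm_map id (th_fP (thom_scale c)) h). Qed.

Definition topp (t : tensor D) := tscale (-1) t.

Lemma taddN (t : tensor D) : tadd (topp t) t = tzero D.
Proof.
have [s [hs ->]] := tensor_cls t; rewrite /topp tscale_cls //.
rewrite tadd_cls //; last exact: tadm_scale.
apply: tcls_eq; [by apply: tadm_cat => //; apply: tadm_scale | by constructor |].
elim: s hs => [|p s IH] hs /=; first exact: te_refl.
have [hp hs'] := (tadm_cons p s).1 hs.
apply: (@te_trans _ _ _ ([:: (rscale (-1) p.1, p.2); p] ++
                   (map (fun p => (rscale (-1) p.1, p.2)) s ++ s))).
  apply: te_perm => /=; apply: perm_skip; apply: Permutation_sym.
  exact: Permutation_middle.
rewrite -[[::]]/([::] ++ [::]); apply: te_cat; last exact: IH.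
case: p hp {hs} => n l /= hn.
apply: te_trans (te_sym (te_addl _ _ _)) _.
- by case: hD => *; auto.
- exact: hn.
by rewrite (ngN hD); apply: te_zerol; case: hD.
Qed.

Lemma tscaleA a b (t : tensor D) : tscale a (tscale b t) = tscale (a * b) t.
Proof.
have [s [hs ->]] := tensor_cls t; rewrite !tscale_cls //; last exact: tadm_scale.
by rewrite -map_comp; congr tcls; apply: eq_map => p /=; rewrite (ngM hD).
Qed.

Lemma tscale1 (t : tensor D) : tscale 1 t = t.
Proof.
have [s [hs ->]] := tensor_cls t; rewrite !tscale_cls //.
by congr tcls; rewrite -[RHS]map_id; apply: eq_map => -[n l] /=; rewrite (ng1 hD).
Qed.

Lemma tscaleDl a b (t : tensor D) : tscale (a + b) t = tadd (tscale a t) (tscale b t).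
Proof.
have [s [hs ->]] := tensor_cls t; rewrite !tscale_cls // tadd_cls; try exact: tadm_scale.
apply: tcls_eq; [exact: tadm_scale | by apply: tadm_cat; apply: tadm_scale |].
elim: s hs => [|p s IH] hs /=; first exact: te_refl.
have [hp hs'] := (tadm_cons p s).1 hs.
apply: (@te_trans _ _ _ ([:: (rscale a p.1, p.2); (rscale b p.1, p.2)] ++
                   (map (fun p => (rscale a p.1, p.2)) s ++
                    map (fun p => (rscale b p.1, p.2)) s))); last first.
  apply: te_perm => /=; apply: perm_skip.
  exact: Permutation_middle.
rewrite -cat1s; apply: te_cat; last exact: IH.
rewrite (ngDl hD); apply: te_addl; case: hD => *; auto.
Qed.

End TensLmod.

HB.instance Definition _ (k : comPzRingType) (D : tdata k) (hD : Ngood D) := gen_eqMixin (@Tens k D hD).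
HB.instance Definition _ (k : comPzRingType) (D : tdata k) (hD : Ngood D) := gen_choiceMixin (@Tens k D hD).
HB.instance Definition _ (k : comPzRingType) (D : tdata k) (hD : Ngood D) := GRing.isZmodule.Build (@Tens k D hD)
  (@taddA k D) (@taddC k D) (@tzero_add k D) (@taddN k D hD).
HB.instance Definition _ (k : comPzRingType) (D : tdata k) (hD : Ngood D) := GRing.Zmodule_isLmodule.Build k (@Tens k D hD)
  (@tscaleA k D hD) (@tscale1 k D hD) (@tscale_add k D hD) (fun v a b => @tscaleDl k D hD a b v).

Section TensTest.
Variable k : comPzRingType.
Variable D : tdata k.
Hypothesis hD : Ngood D.
Lemma Tens_raw : of_lmod (Tens hD) = tensor_raw D.
Proof. reflexivity. Qed.
Lemma Tens_add (t u : Tens hD) : t + u = tadd t u. Proof. reflexivity. Qed.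
Lemma Tens_zero : (0 : Tens hD) = tzero D. Proof. reflexivity. Qed.
Lemma Tens_scale c (t : Tens hD) : c *: t = tscale c t. Proof. reflexivity. Qed.
Lemma Tens_opp (t : Tens hD) : - t = tscale (-1) t. Proof. reflexivity. Qed.
End TensTest.

Section Klin.
Variable k : comPzRingType.
Variables (U V : lmodType k) (f : U -> V).
Hypothesis hf : klinear f.
Lemma klinD u v : f (u + v) = f u + f v.
Proof. by rewrite -[u in LHS]scale1r hf scale1r. Qed.
Lemma klin0 : f 0 = 0.
Proof. by apply: (@addrI _ (f 0)); rewrite -klinD !addr0. Qed.
Lemma klinZ c u : f (c *: u) = c *: f u.
Proof. by rewrite -[c *: u]addr0 hf klin0 addr0. Qed.
Lemma klinN u : f (- u) = - f u.
Proof. by rewrite -scaleN1r klinZ scaleN1r. Qed.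
Lemma klinB u v : f (u - v) = f u - f v.
Proof. by rewrite klinD klinN. Qed.
End Klin.

Section Good.
Variable k : comPzRingType.
Variables (V L : lmodType k) (R : Type) (ra : V -> R -> V) (la : R -> L -> L)
  (P : V -> Prop).
Hypotheses (hra : forall r, klinear (fun m => ra m r))
  (P0 : P 0) (PD : forall u v, P u -> P v -> P (u + v))
  (PZ : forall c u, P u -> P (c *: u)).
Lemma ngood_gen : Ngood (@TData k (of_lmod V) (of_lmod L) R ra la P).
Proof.
split=> //=.
- by move=> *; rewrite scalerDr.
- by move=> *; rewrite scaler0.
- by move=> c n r; rewrite (klinZ (hra r)).
- by move=> *; rewrite scalerA.
- by move=> *; rewrite scale1r.
- by move=> *; rewrite scalerDl.
- by move=> n; rewrite scaleN1r addNr.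
Qed.
End Good.

Lemma ngood_RL (k : comPzRingType) (R : kalg k) (V : rmodule R) (L : lmodType k)
  (la : R -> L -> L) : Ngood (tdRL V la).
Proof. by apply: ngood_gen => //; apply: rma_linl. Qed.

Definition regmod (k : comPzRingType) (R : kalg k) : rmodule R :=
  @RModule k R R (@amul k R) (@amul_linl k R) (@amul_linr k R)
    (fun m r s => esym (amulA m r s)) (@amul1r k R).

Section TA.
Variable k : comPzRingType.
Variables (X : Type) (B : X -> kalg k) (A : kcat k X) (i : kXfunctor B A).
Variable x : X.
Local Notation R := (B x).
Local Notation la y := (ila i x y).

Definition rmulA (V : rmodule R) y z (a' : Defs.Hom A y z)
  (t : tensor (tdRL V (la y))) : tensor (tdRL V (la z)) :=
  tmap (D:=tdRL V (la y)) (D':=tdRL V (la z)) id (fun a => Defs.comp a a') t.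

Lemma ilaE y r (a : Defs.Hom A x y) : ila i x y r a = Defs.comp (ifun i r) a.
Proof. by []. Qed.

Lemma thom_rmul (V : rmodule R) y z (a' : Defs.Hom A y z) :
  thom (D:=tdRL V (la y)) (D':=tdRL V (la z)) id id (fun a => Defs.comp a a').
Proof.
split=> //=.
- by move=> l l'; rewrite (klinD (Defs.comp_linl a')).
- by rewrite (klin0 (Defs.comp_linl a')).
- by move=> r l; rewrite !ilaE Defs.compA.
Qed.

Lemma thom_map (V W : rmodule R) y (f : V -> W) : rmod_hom f ->
  thom (D:=tdRL V (la y)) (D':=tdRL W (la y)) id f id.
Proof.
case=> hl hr; split=> //=.
- by move=> *; rewrite (klinD hl).
- by move=> *; rewrite (klin0 hl).
Qed.

Lemma tmul_scaler (V : rmodule R) y (n : V) c (a : Defs.Hom A x y) :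
  tmul (D:=tdRL V (la y)) n (c *: a) = tmul (D:=tdRL V (la y)) (c *: n) a.
Proof.
have e1 : c *: a = ila i x y (c *: aone R) a.
  by rewrite ilaE (klinZ (@ifun_lin _ _ _ _ i x)) ifun_one (klinZ (Defs.comp_linl a)) Defs.comp1l.
have e2 : c *: n = @rma _ _ V n (c *: aone R).
  by rewrite (klinZ (rma_linr n)) rma1.
by rewrite e1 e2 (tmul_bal (D:=tdRL V (la y))).
Qed.
End TA.

Section TA2.
Variable k : comPzRingType.
Variables (X : Type) (B : X -> kalg k) (A : kcat k X) (i : kXfunctor B A).
Variable x : X.
Local Notation R := (B x).
Local Notation la y := (ila i x y).

Definition TT (V : rmodule R) y : lmodType k := Tens (ngood_RL V (la y)).
Local Notation tm V y n l := (@tmul _ (tdRL V (ila i x y)) n l : TT V y).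

Definition rmulT (V : rmodule R) y z (a' : Defs.Hom A y z) (t : TT V y) : TT V z :=
  @rmulA _ _ _ _ i x V y z a' t.

Lemma TT_ind (V : rmodule R) y (Q : TT V y -> Prop) :
  Q 0 -> (forall n l, Q (tm V y n l)) ->
  (forall t u, Q t -> Q u -> Q (t + u)) -> forall t, Q t.
Proof. by move=> h0 h1 h2; apply: tensor_ind. Qed.

Lemma TT_mulD (V : rmodule R) y (n n' : V) (l : Defs.Hom A x y) :
  (tm V y (n + n') l : TT V y) = tm V y n l + tm V y n' l.
Proof. exact: (@tmul_addl _ (tdRL V (la y)) n n' l I I I). Qed.

Lemma TT_mulDr (V : rmodule R) y (n : V) (l l' : Defs.Hom A x y) :
  (tm V y n (l + l') : TT V y) = tm V y n l + tm V y n l'.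
Proof. exact: (@tmul_addr' _ (tdRL V (la y)) n l l' I). Qed.

Lemma TT_mulZ (V : rmodule R) y (n : V) c (l : Defs.Hom A x y) :
  (tm V y (c *: n) l : TT V y) = c *: tm V y n l.
Proof. by rewrite Tens_scale (@tscale_mul _ _ (ngood_RL V (la y)) c n l I). Qed.

Lemma TT_mulZr (V : rmodule R) y (n : V) c (l : Defs.Hom A x y) :
  (tm V y n (c *: l) : TT V y) = c *: tm V y n l.
Proof. by rewrite tmul_scaler TT_mulZ. Qed.

Lemma TT_mul0 (V : rmodule R) y (l : Defs.Hom A x y) :
  (tm V y 0 l : TT V y) = 0.
Proof. exact: (@tmul_zerol _ (tdRL V (la y)) l I). Qed.

Lemma TT_mul0r (V : rmodule R) y (n : V) :
  (tm V y n 0 : TT V y) = 0.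
Proof. exact: (@tmul_zeror _ (tdRL V (la y)) n I). Qed.

Lemma TT_mulN (V : rmodule R) y (n : V) (l : Defs.Hom A x y) :
  (tm V y (- n) l : TT V y) = - tm V y n l.
Proof. by rewrite -scaleN1r TT_mulZ scaleN1r. Qed.

Lemma TT_mulB (V : rmodule R) y (n n' : V) (l : Defs.Hom A x y) :
  (tm V y (n - n') l : TT V y) = tm V y n l - tm V y n' l.
Proof. by rewrite TT_mulD TT_mulN. Qed.

Lemma TT_bal (V : rmodule R) y (n : V) r (l : Defs.Hom A x y) :
  (tm V y (rma n r) l : TT V y) = tm V y n (ila i x y r l).
Proof. exact: (@tmul_bal _ (tdRL V (la y)) n r l I I). Qed.

Definition mapT (V W : rmodule R) (y : X) (f : V -> W) (t : TT V y) : TT W y :=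
  tmap (D:=tdRL V (la y)) (D':=tdRL W (la y)) f id t.

Lemma mapT_mul (V W : rmodule R) (y : X) (f : V -> W) (hf : rmod_hom f) n l :
  @mapT V W y f (tm V y n l) = tm W y (f n) l.
Proof. exact: (tmapM (thom_map i y hf)). Qed.

Lemma mapT_add (V W : rmodule R) (y : X) (f : V -> W) (hf : rmod_hom f) t u :
  @mapT V W y f (t + u) = @mapT V W y f t + @mapT V W y f u.
Proof. exact: (tmapD (thom_map i y hf)). Qed.

Lemma mapT0 (V W : rmodule R) (y : X) (f : V -> W) (hf : rmod_hom f) :
  @mapT V W y f 0 = 0.
Proof. exact: (tmap0 (thom_map i y hf)). Qed.

Lemma mapT_lin (V W : rmodule R) (y : X) (f : V -> W) (hf : rmod_hom f) :
  klinear (@mapT V W y f).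
Proof.
move=> c t u; rewrite mapT_add //; congr (_ + _).
elim/TT_ind: t => [|n l|t u' IH1 IH2].
- by rewrite scaler0 mapT0 // scaler0.
- by rewrite -TT_mulZ !mapT_mul // -TT_mulZ; case: hf => hl _; rewrite (klinZ hl).
- by rewrite scalerDr !mapT_add // IH1 IH2 scalerDr.
Qed.

Section RM.
Variable V : rmodule R.
Local Notation rm y z := (@rmulT V y z).

Lemma rmulT_mul y z (a' : Defs.Hom A y z) (n : V) l :
  rm y z a' (tm V y n l) = tm V z n (Defs.comp l a').
Proof. exact: (tmapM (thom_rmul i V a')). Qed.

Lemma rmulT_add y z (a' : Defs.Hom A y z) t u :
  rm y z a' (t + u) = rm y z a' t + rm y z a' u.
Proof. exact: (tmapD (thom_rmul i V a')). Qed.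

Lemma rmulT0 y z (a' : Defs.Hom A y z) : rm y z a' 0 = 0.
Proof. exact: (tmap0 (thom_rmul i V a')). Qed.

Lemma rmulT_lin y z (a' : Defs.Hom A y z) : klinear (rm y z a').
Proof.
move=> c t u; rewrite rmulT_add //; congr (_ + _).
elim/TT_ind: t => [|n l|t u' IH1 IH2].
- by rewrite scaler0 rmulT0 scaler0.
- by rewrite -TT_mulZ !rmulT_mul -TT_mulZ.
- by rewrite scalerDr !rmulT_add IH1 IH2 scalerDr.
Qed.

Lemma rmulT_addr y z (a1 a2 : Defs.Hom A y z) t :
  rm y z (a1 + a2) t = rm y z a1 t + rm y z a2 t.
Proof.
elim/TT_ind: t => [|n l|t u IH1 IH2].
- by rewrite !rmulT0 addr0.
- by rewrite !rmulT_mul (klinD (Defs.comp_linr l)) TT_mulDr.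
- by rewrite !rmulT_add IH1 IH2 addrACA.
Qed.

Lemma rmulT_scaler y z c (a : Defs.Hom A y z) t :
  rm y z (c *: a) t = c *: rm y z a t.
Proof.
elim/TT_ind: t => [|n l|t u IH1 IH2].
- by rewrite !rmulT0 scaler0.
- by rewrite !rmulT_mul (klinZ (Defs.comp_linr l)) TT_mulZr.
- by rewrite !rmulT_add IH1 IH2 scalerDr.
Qed.

Lemma rmulT_comp y z w (a1 : Defs.Hom A y z) (a2 : Defs.Hom A z w) t :
  rm z w a2 (rm y z a1 t) = rm y w (Defs.comp a1 a2) t.
Proof.
elim/TT_ind: t => [|n l|t u IH1 IH2].
- by rewrite !rmulT0.
- by rewrite !rmulT_mul Defs.compA.
- by rewrite !rmulT_add IH1 IH2.
Qed.

Lemma rmulT_id y t : rm y y (idm A y) t = t.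
Proof.
elim/TT_ind: t => [|n l|t u IH1 IH2].
- by rewrite !rmulT0.
- by rewrite !rmulT_mul Defs.comp1r.
- by rewrite !rmulT_add IH1 IH2.
Qed.
End RM.

Lemma rmulT_mapT (V W : rmodule R) (f : V -> W) (hf : rmod_hom f) y z
  (a : Defs.Hom A y z) t :
  @rmulT W y z a (@mapT V W y f t) = @mapT V W z f (@rmulT V y z a t).
Proof.
elim/TT_ind: t => [|n l|t u IH1 IH2].
- by rewrite mapT0 // !rmulT0 mapT0.
- by rewrite mapT_mul // !rmulT_mul mapT_mul.
- by rewrite mapT_add // !rmulT_add IH1 IH2 mapT_add.
Qed.

Definition TAact (V : rmodule R) (t : TT V x) (b : R) : TT V x :=
  @rmulT V x x (ifun i b) t.

Lemma TA_linl (V : rmodule R) r : klinear (fun t : TT V x => TAact t r).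
Proof. exact: rmulT_lin. Qed.

Lemma TA_linr (V : rmodule R) (t : TT V x) : klinear (TAact t).
Proof.
move=> c b b'; rewrite /TAact (@ifun_lin _ _ _ _ i x).
by rewrite rmulT_addr rmulT_scaler.
Qed.

Lemma TA_A (V : rmodule R) (t : TT V x) r s :
  TAact (TAact t r) s = TAact t (amul r s).
Proof. by rewrite /TAact rmulT_comp ifun_mul. Qed.

Lemma TA_1 (V : rmodule R) (t : TT V x) : TAact t (aone R) = t.
Proof. by rewrite /TAact ifun_one rmulT_id. Qed.

Definition TA (V : rmodule R) : rmodule R :=
  @RModule k R (TT V x) (@TAact V) (@TA_linl V) (@TA_linr V) (@TA_A V) (@TA_1 V).

Lemma TAact_tdA (V : rmodule R) (t : TT V x) b :
  TAact t b = tdA_ract k X B A i x (of_lmod V) (@rma _ _ V) t b.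
Proof. reflexivity. Qed.

Lemma tdNN_TA (N : forall y, rmodule (B y)) y :
  tdNN k X B A i N x y = tdRL (TA (N x)) (la y).
Proof. reflexivity. Qed.

Lemma tdN_RL (N : forall y, rmodule (B y)) y :
  tdN k X B A i N x y = tdRL (N x) (la y).
Proof. reflexivity. Qed.
End TA2.

Notation TTg := (@TT) (only parsing).

Section Unit.
Variable k : comPzRingType.
Variables (X : Type) (B : X -> kalg k) (A : kcat k X) (i : kXfunctor B A).
Variable x : X.
Local Notation R := (B x).
Local Notation la := (ila i x x).
Local Notation TT V := (@TT _ _ _ _ i x V x).
Local Notation tm V n l := (@tmul _ (tdRL V (ila i x x)) n l : TT V).
Local Notation rmT V a t := (@rmulT _ _ _ _ i x V x x a t).
Local Notation mT V W f t := (@mapT _ _ _ _ i x V W x f t).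
Local Notation TA V := (@TA _ _ _ _ i x V).

Section H.
Variable V : rmodule R.

Definition hmap (T : TT (TA V)) : TT V :=
  tlift (D:=tdRL (TA V) la) (Z:=of_lmod (TT V)) (fun t a' => rmT V a' t) T.

Let phi (t : TT V) (a' : Defs.Hom A x x) : TT V := rmT V a' t.

Lemma hmap_props :
  (forall t u, hmap (t + u) = hmap t + hmap u) /\
  (forall t a', hmap (tm (TA V) t a') = rmT V a' t) /\ hmap 0 = 0.
Proof.
have pDl : forall (n n' : TT V) l, True -> True -> phi (n + n') l = phi n l + phi n' l.
  by move=> *; rewrite /phi rmulT_add.
have pDr : forall (n : TT V) l l', True -> phi n (l + l') = phi n l + phi n l'.
  by move=> *; rewrite /phi rmulT_addr.
have p0l : forall l, True -> phi 0 l = 0.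
  by move=> *; rewrite /phi rmulT0.
have p0r : forall n, True -> phi n 0 = 0.
  move=> n _; rewrite /phi -(scale0r (idm A x)) rmulT_scaler scale0r //.
have pbal : forall (n : TT V) r l, True -> True ->
    phi (TAact n r) l = phi n (ila i x x r l).
  by move=> n r l _ _; rewrite /phi /TAact rmulT_comp.
split; [|split].
- move=> t u; exact: (tlift_add (D:=tdRL (TA V) la) (V:=TT V) pDl pDr p0l p0r pbal).
- move=> t a'; have := (tlift_mul (D:=tdRL (TA V) la) (V:=TT V) pDl pDr p0l p0r pbal (n:=t) a' I). exact.
- exact: (tlift_zero (D:=tdRL (TA V) la) (V:=TT V) pDl pDr p0l p0r pbal).
Qed.

Lemma hmap_add t u : hmap (t + u) = hmap t + hmap u.
Proof. by case: hmap_props. Qed.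
Lemma hmap_mul t a' : hmap (tm (TA V) t a') = rmT V a' t.
Proof. by case: hmap_props => _ []. Qed.
Lemma hmap0 : hmap 0 = 0.
Proof. by case: hmap_props => _ []. Qed.
Lemma hmapB t u : hmap (t - u) = hmap t - hmap u.
Proof. by apply/eqP; rewrite eq_sym subr_eq -hmap_add subrK. Qed.
End H.

Section UD.
Variable V : rmodule R.
Definition uM (n : V) : TT V := tm V n (idm A x).

Lemma uM_hom : rmod_hom (N:=V) (N':=TA V) uM.
Proof.
split.
- by move=> c n n'; rewrite /uM TT_mulD TT_mulZ.
- move=> n r; rewrite /uM /= /TAact rmulT_mul TT_bal.
  by rewrite ilaE Defs.comp1l Defs.comp1r.
Qed.

Definition dM (t : TT V) : TT (TA V) :=
  mT V (TA V) uM t - tm (TA V) t (idm A x).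

Lemma tmT_lin (W : rmodule R) (l : Defs.Hom A x x) : klinear (fun t : W => tm W t l).
Proof. by move=> c t u; rewrite TT_mulD TT_mulZ. Qed.

Lemma dM_hom : rmod_hom (N:=TA V) (N':=TA (TA V)) dM.
Proof.
split.
- move=> c t u; rewrite /dM (mapT_lin uM_hom) (@tmT_lin (TA V) (idm A x) c t u).
  by rewrite scalerBr addrACA opprD.
- move=> t r; rewrite /dM /= /TAact.
  rewrite (klinB (rmulT_lin (ifun i r))).
  rewrite (rmulT_mapT uM_hom) rmulT_mul Defs.comp1l.
  congr (_ - _); rewrite -[rmulT _ _]/(TAact t r) TT_bal.
  by rewrite ilaE Defs.comp1r.
Qed.

Lemma dMu n : dM (uM n) = 0.
Proof. by rewrite /dM (mapT_mul uM_hom) subrr. Qed.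

Lemma htpy1 T : hmap (mT V (TA V) uM T) = T.
Proof.
elim/TT_ind: T => [|n l|t u IH1 IH2].
- by rewrite (mapT0 i x uM_hom) hmap0.
- by rewrite (mapT_mul uM_hom) hmap_mul /uM rmulT_mul Defs.comp1l.
- by rewrite (mapT_add uM_hom) hmap_add IH1 IH2.
Qed.

Lemma htpy2 (T : TT (TA V)) : T = mT V (TA V) uM (hmap T) - hmap (mT (TA V) (TA (TA V)) dM T).
Proof.
elim/TT_ind: T => [|t a' |t u IH1 IH2].
- by rewrite (mapT0 i x dM_hom) !hmap0 (mapT0 i x uM_hom) subrr.
- elim/TT_ind: t => [|n a|t u IH1 IH2].
  + by rewrite TT_mul0 (mapT0 i x dM_hom) !hmap0 (mapT0 i x uM_hom) subrr.
  + rewrite hmap_mul rmulT_mul (mapT_mul uM_hom) (mapT_mul dM_hom).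
    rewrite /dM (mapT_mul uM_hom) TT_mulB hmapB !hmap_mul.
    by rewrite !rmulT_mul Defs.comp1l /uM opprB addrC subrK.
  + rewrite TT_mulD {1}IH1 {1}IH2 !(mapT_add dM_hom) !hmap_add.
    by rewrite !(mapT_add uM_hom) opprD addrACA.
- rewrite {1}IH1 {1}IH2 !(mapT_add dM_hom) !hmap_add.
  by rewrite !(mapT_add uM_hom) opprD addrACA.
Qed.
End UD.
End Unit.

Section FF.
Variable k : comPzRingType.
Variables (X : Type) (B : X -> kalg k) (A : kcat k X) (i : kXfunctor B A).
Variable x : X.
Local Notation R := (B x).
Local Notation la := (ila i x x).
Local Notation TT V := (@TT _ _ _ _ i x V x).
Local Notation tm V n l := (@tmul _ (tdRL V (ila i x x)) n l : TT V).
Local Notation mT V W f t := (@mapT _ _ _ _ i x V W x f t).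
Local Notation TA V := (@TA _ _ _ _ i x V).

Lemma zero_hom (V W : rmodule R) : rmod_hom (N:=V) (N':=W) (fun _ => 0).
Proof.
split; first by move=> *; rewrite scaler0 addr0.
by move=> n r; rewrite (klin0 (@rma_linl _ _ W r)).
Qed.

Lemma mapT_zf (V W : rmodule R) (t : TT V) : mT V W (fun _ => 0) t = 0.
Proof.
elim/TT_ind: t => [|n l|t u IH1 IH2].
- exact: (mapT0 i x (zero_hom V W)).
- by rewrite (mapT_mul (zero_hom V W)) TT_mul0.
- by rewrite (mapT_add (zero_hom V W)) IH1 IH2 addr0.
Qed.

Hypothesis hff : faithfully_flat_left (ila i x x).

Lemma ff_inj (V W : rmodule R) (f : V -> W) (hf : rmod_hom f) :
  (forall t, mT V W f t = 0 -> t = 0) -> injective f.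
Proof.
move=> H.
have e := (hff (zero_hom V V) hf).2.
have ex : @exact3 k (of_lmod V) (of_lmod V) (of_lmod W) (fun _ => 0) f.
  have hz : forall t, tmap (D:=tdRL V la) (D':=tdRL V la) (fun _ => 0) id t = tzero _.
    exact: mapT_zf.
  apply: e => v; split.
  - move=> hv; exists (tzero _); rewrite hz; symmetry; exact: H.
  - by case=> w <-; rewrite hz; exact: (mapT0 i x hf).
move=> a b eab; apply/eqP; rewrite -subr_eq0; apply/eqP.
have : f (a - b) = 0.
  by case: hf => hl _; rewrite (klinB hl) eab subrr.
by move/(ex (a - b)) => [w <-].
Qed.

Lemma ff_unit (V : rmodule R) :
  injective (uM i (x:=x) (V:=V)) /\
  (forall t, dM t = 0 <-> exists n, uM i (x:=x) (V:=V) n = t).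
Proof.
split.
- apply: (ff_inj (uM_hom i V)) => t h.
  by rewrite -(htpy1 t) h hmap0.
- have e := (hff (uM_hom i V) (dM_hom i V)).2.
  apply: e => T; split.
  + move=> hT; exists (hmap T).
    have hT' : mT (TA V) (TA (TA V)) (dM (V:=V)) T = 0 := hT.
    by rewrite {2}(htpy2 T) hT' hmap0 subr0.
  + case=> S <-.
    change (mT (TA V) (TA (TA V)) (dM (V:=V)) (mT V (TA V) (uM i (V:=V)) S) = 0).
    elim/TT_ind: S => [|n l|t u IH1 IH2].
    * by rewrite (mapT0 i x (uM_hom i V)) (mapT0 i x (dM_hom i V)).
    * by rewrite (mapT_mul (uM_hom i V)) (mapT_mul (dM_hom i V)) dMu TT_mul0.
    * by rewrite (mapT_add (uM_hom i V)) (mapT_add (dM_hom i V)) IH1 IH2 addr0.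
Qed.
End FF.

Lemma dir1_unit k (X : Type) (B : X -> kalg k) (A : kcat k X) (i : kXfunctor B A)
  (hff : forall x, faithfully_flat_left (ila i x x)) (N : forall x, rmodule (B x)) :
  unit_iso i N.
Proof.
move=> x; have [h1 h2] := ff_unit (hff x) (N x); split; first exact: h1.
move=> t; rewrite -h2.
change (@mapT _ _ _ _ i x (N x) (TA i (N x)) x (uM i (V:=N x)) t =
        (@tmul _ (tdRL (TA i (N x)) (ila i x x)) t (idm A x)) <-> dM t = 0).
rewrite /dM; split=> h; first by rewrite h subrr.
by apply/eqP; rewrite -subr_eq0; apply/eqP.
Qed.

Record closedP (k : comPzRingType) (R : kalg k) (V : rmodule R) (P : V -> Prop) : Prop :=
  ClosedP {
  cP0 : P 0;
  cPD : forall u v, P u -> P v -> P (u + v);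
  cPZ : forall c u, P u -> P (c *: u);
  cPR : forall u r, P u -> P (rma u r) }.

Definition subT (k : comPzRingType) (R : kalg k) (V : rmodule R) (P : V -> Prop)
  (_ : closedP P) : Type := {v : V | P v}.

Section Sub.
Variable k : comPzRingType.
Variable R : kalg k.
Variable V : rmodule R.
Variable P : V -> Prop.
Hypothesis hP : closedP P.
Local Notation S := (subT hP).

Definition sval' (a : S) : V := proj1_sig a.
Lemma sval_inj (a b : S) : sval' a = sval' b -> a = b.
Proof.
case: a => a ha; case: b => b hb /= e; subst b.
by rewrite (proof_irrelevance _ ha hb).
Qed.

Definition sadd (a b : S) : S := exist _ (sval' a + sval' b) (cPD hP (proj2_sig a) (proj2_sig b)).
Definition szero : S := exist _ 0 (cP0 hP).
Definition sscale (c : k) (a : S) : S := exist _ (c *: sval' a) (cPZ hP c (proj2_sig a)).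
Definition sopp (a : S) : S := sscale (-1) a.
Definition sact (a : S) (r : R) : S := exist _ (rma (sval' a) r) (cPR hP r (proj2_sig a)).

Lemma saddA : associative sadd.
Proof. by move=> a b c; apply: sval_inj; rewrite /= addrA. Qed.
Lemma saddC : commutative sadd.
Proof. by move=> a b; apply: sval_inj; rewrite /= addrC. Qed.
Lemma sadd0 : left_id szero sadd.
Proof. by move=> a; apply: sval_inj; rewrite /= add0r. Qed.
Lemma saddN : left_inverse szero sopp sadd.
Proof. by move=> a; apply: sval_inj; rewrite /= scaleN1r addNr. Qed.
Lemma sscaleA a b v : sscale a (sscale b v) = sscale (a * b) v.
Proof. by apply: sval_inj; rewrite /= scalerA. Qed.
Lemma sscale1 : left_id 1 sscale.
Proof. by move=> a; apply: sval_inj; rewrite /= scale1r. Qed.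
Lemma sscaleDr : right_distributive sscale sadd.
Proof. by move=> a u v; apply: sval_inj; rewrite /= scalerDr. Qed.
Lemma sscaleDl v a b : sscale (a + b) v = sadd (sscale a v) (sscale b v).
Proof. by apply: sval_inj; rewrite /= scalerDl. Qed.
End Sub.

HB.instance Definition _ (k : comPzRingType) (R : kalg k) (V : rmodule R) (P : V -> Prop)
  (hP : closedP P) := gen_eqMixin (subT hP).
HB.instance Definition _ (k : comPzRingType) (R : kalg k) (V : rmodule R) (P : V -> Prop)
  (hP : closedP P) := gen_choiceMixin (subT hP).
HB.instance Definition _ (k : comPzRingType) (R : kalg k) (V : rmodule R) (P : V -> Prop)
  (hP : closedP P) := GRing.isZmodule.Build (subT hP)
  (@saddA k R V P hP) (@saddC k R V P hP) (@sadd0 k R V P hP) (@saddN k R V P hP).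
HB.instance Definition _ (k : comPzRingType) (R : kalg k) (V : rmodule R) (P : V -> Prop)
  (hP : closedP P) := GRing.Zmodule_isLmodule.Build k (subT hP)
  (@sscaleA k R V P hP) (@sscale1 k R V P hP) (@sscaleDr k R V P hP)
  (fun v a b => @sscaleDl k R V P hP v a b).

Section SubMod.
Variable k : comPzRingType.
Variable R : kalg k.
Variable V : rmodule R.
Variable P : V -> Prop.
Hypothesis hP : closedP P.

Lemma svalD (a b : subT hP) : sval' (a + b) = sval' a + sval' b. Proof. by []. Qed.
Lemma svalZ c (a : subT hP) : sval' (c *: a) = c *: sval' a. Proof. by []. Qed.
Lemma sval0 : sval' (0 : subT hP) = 0. Proof. by []. Qed.

Lemma sact_linl r : klinear (fun a : subT hP => sact a r).
Proof. by move=> c a b; apply: sval_inj; rewrite /= (@rma_linl _ _ V). Qed.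
Lemma sact_linr (a : subT hP) : klinear (sact a).
Proof. by move=> c r s; apply: sval_inj; rewrite /= (@rma_linr _ _ V). Qed.
Lemma sactA (a : subT hP) r s : sact (sact a r) s = sact a (amul r s).
Proof. by apply: sval_inj; rewrite /= rmaA. Qed.
Lemma sact1 (a : subT hP) : sact a (aone R) = a.
Proof. by apply: sval_inj; rewrite /= rma1. Qed.

Definition subm : rmodule R :=
  @RModule k R (subT hP) (@sact k R V P hP) sact_linl sact_linr sactA sact1.

Lemma sval_hom : rmod_hom (N:=subm) (N':=V) (@sval' k R V P hP).
Proof. by split. Qed.

Definition tosub (v : V) : subm :=
  match excluded_middle_informative (P v) with
  | left h => exist _ v h
  | right _ => 0
  end.

Lemma tosubK v : P v -> sval' (tosub v) = v.
Proof. by rewrite /tosub; case: excluded_middle_informative. Qed.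

Lemma svalP (a : subm) : P (sval' a).
Proof. exact: proj2_sig a. Qed.
End SubMod.

Section Flat.
Variable k : comPzRingType.
Variables (X : Type) (B : X -> kalg k) (A : kcat k X) (i : kXfunctor B A).
Variables x y : X.
Local Notation R := (B x).
Local Notation TT V := (@TT _ _ _ _ i x V y).
Local Notation mT V W f t := (@mapT _ _ _ _ i x V W y f t).
Hypothesis hfl : flat_left (ila i x y).

Lemma mapT_zf' (V W : rmodule R) (t : TT V) : mT V W (fun _ => 0) t = 0.
Proof.
elim/TT_ind: t => [|n l|t u IH1 IH2].
- exact: (mapT0 i y (zero_hom V W)).
- by rewrite (mapT_mul (zero_hom V W)) TT_mul0.
- by rewrite (mapT_add (zero_hom V W)) IH1 IH2 addr0.
Qed.

Lemma flat_exact (V1 V2 V3 : rmodule R) (f : V1 -> V2) (g : V2 -> V3)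
  (hf : rmod_hom f) (hg : rmod_hom g) :
  (forall v, g v = 0 <-> exists u, f u = v) ->
  forall T : TT V2, mT V2 V3 g T = 0 <-> exists S : TT V1, mT V1 V2 f S = T.
Proof. by move=> h; apply: (hfl hf hg). Qed.

Lemma flat_inj0 (V W : rmodule R) (f : V -> W) (hf : rmod_hom f) :
  (forall v, f v = 0 -> v = 0) -> forall t : TT V, mT V W f t = 0 -> t = 0.
Proof.
move=> h t ht.
have e := flat_exact (zero_hom V V) hf.
have [|S <-] := (e _ t).1 ht; last exact: mapT_zf'.
move=> v; split; first by move=> hv; exists 0; rewrite (h v hv).
by case=> u <-; case: hf => hl _; exact: (klin0 hl).
Qed.

Lemma flat_inj (V W : rmodule R) (f : V -> W) (hf : rmod_hom f) :
  injective f -> injective (fun t : TT V => mT V W f t).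
Proof.
move=> finj.
have h0 : forall v, f v = 0 -> v = 0.
  by move=> v hv; apply: finj; rewrite hv; case: hf => hl _; rewrite (klin0 hl).
move=> a b e; apply/eqP; rewrite -subr_eq0; apply/eqP; apply: (flat_inj0 hf h0).
by rewrite (klinB (mapT_lin hf)) e subrr.
Qed.
End Flat.

Lemma mapT_sub k (X : Type) (B : X -> kalg k) (A : kcat k X) (i : kXfunctor B A) x y
  (V W : rmodule (B x)) (f g : V -> W) (hf : rmod_hom f) (hg : rmod_hom g)
  (hfg : rmod_hom (fun v => f v - g v)) t :
  @mapT _ _ _ _ i x V W y (fun v => f v - g v) t =
  @mapT _ _ _ _ i x V W y f t - @mapT _ _ _ _ i x V W y g t.
Proof.
elim/TT_ind: t => [|n l|t u IH1 IH2].
- by rewrite !(mapT0 i y) // subr0.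
- by rewrite !mapT_mul // TT_mulB.
- by rewrite !mapT_add // IH1 IH2 opprD addrACA.
Qed.

Lemma hom_sub k (R : kalg k) (V W : rmodule R) (f g : V -> W) :
  rmod_hom f -> rmod_hom g -> rmod_hom (fun v => f v - g v).
Proof.
case=> f1 f2 [g1 g2]; split.
- by move=> c u v; rewrite f1 g1 scalerBr opprD addrACA.
- by move=> n r; rewrite f2 g2 (klinB (@rma_linl _ _ W r)).
Qed.

Section Counit.
Variable k : comPzRingType.
Variables (X : Type) (B : X -> kalg k) (A : kcat k X) (i : kXfunctor B A).
Variable M : rAmodule A.
Variable sigma : forall x y : X, Mc M x y -> tensor (tdM i M x y).
Hypothesis Hd : is_descent i M sigma.
Variable x : X.
Local Notation R := (B x).

Lemma Mx_linl r : klinear (fun m : Mc M x x => Ma m (ifun i r)).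
Proof. exact: Ma_linl. Qed.
Lemma Mx_linr (m : Mc M x x) : klinear (fun r : R => Ma m (ifun i r)).
Proof. by move=> c r s; rewrite (@ifun_lin _ _ _ _ i x) Ma_linr. Qed.
Lemma Mx_A (m : Mc M x x) r s :
  Ma (Ma m (ifun i r)) (ifun i s) = Ma m (ifun i (amul r s)).
Proof. by rewrite MaA ifun_mul. Qed.
Lemma Mx_1 (m : Mc M x x) : Ma m (ifun i (aone R)) = m.
Proof. by rewrite ifun_one Ma1. Qed.

Definition Mx : rmodule R :=
  @RModule k R (Mc M x x) (fun m r => Ma m (ifun i r)) Mx_linl Mx_linr Mx_A Mx_1.

Local Notation TT y := (@TT _ _ _ _ i x Mx y).
Local Notation tm y n l := (@tmul _ (tdRL Mx (ila i x y)) n l : TT y).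

Definition sg y (m : Mc M x y) : TT y := @sigma x y m.

Lemma sg_lin y : klinear (@sg y).
Proof. by case: Hd => h _ _ _; move=> c m m'; exact: h. Qed.

Lemma sg_i y z (m : Mc M x y) (a : Defs.Hom A y z) :
  sg (Ma m a) = @rmulT _ _ _ _ i x Mx y z a (sg m).
Proof. by case: Hd => _ h _ _; exact: h. Qed.

Lemma sg_hom : rmod_hom (N:=Mx) (N':=TA i Mx) (@sg x).
Proof. by split; [exact: sg_lin | move=> n r; exact: sg_i]. Qed.

Lemma sg_ii y (m : Mc M x y) :
  @mapT _ _ _ _ i x Mx (TA i Mx) y (@sg x) (sg m) =
  @mapT _ _ _ _ i x Mx (TA i Mx) y (uM i (V:=Mx)) (sg m).
Proof. by case: Hd => _ _ h _; exact: h. Qed.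

Lemma sg_iii y (m : Mc M x y) :
  tlift (D:=tdRL Mx (ila i x y)) (Z:=of_lmod (Mc M x y)) (fun m0 a => Ma m0 a) (sg m) = m.
Proof. by case: Hd => _ _ _ h; exact: h. Qed.

Definition GP (m : Mx) : Prop := Gpred k X B A i M sigma x m.

Lemma GP_E m : GP m <-> sg m = tm x m (idm A x).
Proof. by []. Qed.

Lemma GP_closed : closedP GP.
Proof.
split.
- by apply/GP_E; rewrite (klin0 (@sg_lin x)) TT_mul0.
- move=> u v /GP_E hu /GP_E hv; apply/GP_E.
  by rewrite (klinD (@sg_lin x)) hu hv TT_mulD.
- move=> c u /GP_E hu; apply/GP_E; by rewrite (klinZ (@sg_lin x)) hu TT_mulZ.
- move=> u r /GP_E hu; apply/GP_E; rewrite /= sg_i hu rmulT_mul.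
  by rewrite TT_bal ilaE Defs.comp1l Defs.comp1r.
Qed.

Definition G : rmodule R := subm GP_closed.
Definition gval : G -> Mx := @sval' _ _ _ _ GP_closed.

Definition dsig (m : Mx) : TA i Mx := sg m - uM i (V:=Mx) m.
Lemma dsig_hom : rmod_hom dsig.
Proof. exact: (hom_sub sg_hom (uM_hom i Mx)). Qed.

Lemma G_exact : forall v : Mx, dsig v = 0 <-> exists u : G, gval u = v.
Proof.
move=> v; split.
- move=> h; exists (tosub GP_closed v); apply: tosubK; apply/GP_E.
  by apply/eqP; rewrite -subr_eq0; apply/eqP.
- case=> u <-; rewrite /dsig; have := svalP u; move/GP_E => ->.
  by rewrite subrr.
Qed.

Section Y.
Variable y : X.
Hypothesis hfl : flat_left (ila i x y).
Local Notation la := (ila i x y).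
Local Notation TF := (tensor (tdFG k X B A i M sigma x y)).
Local Notation DF := (tdFG k X B A i M sigma x y).
Local Notation TG := (@TTg _ _ _ _ i x G y).

Definition DP (P : Mx -> Prop) : tdata k :=
  @TData k (of_lmod Mx) (of_lmod (Defs.Hom A x y)) R (fun m r => Ma m (ifun i r)) la P.

Lemma lift_props (P : Mx -> Prop) :
  let Lf := tlift (D:=DP P) (Z:=of_lmod (Mc M x y))
              (fun (m : Mx) (a : Defs.Hom A x y) => Ma m a) in
  (forall t u, Lf (tadd t u) = Lf t + Lf u) /\
  (forall n l, P n -> Lf (tmul (D:=DP P) n l) = Ma n l) /\ Lf (tzero _) = 0.
Proof.
have pDl : forall (n n' : Mx) (l : Defs.Hom A x y), P n -> P n' -> Ma (n + n') l = Ma n l + Ma n' l.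
  by move=> n n' l h1 h2; rewrite (klinD (Ma_linl l)).
have pDr : forall (n : Mx) (l l' : Defs.Hom A x y), P n -> Ma n (l + l') = Ma n l + Ma n l'.
  by move=> n l l' h1; rewrite (klinD (Ma_linr n)).
have p0l : forall l : Defs.Hom A x y, P 0 -> Ma (0 : Mx) l = 0.
  by move=> l h1; rewrite (klin0 (Ma_linl l)).
have p0r : forall n : Mx, P n -> Ma n (0 : Defs.Hom A x y) = 0.
  by move=> n h1; rewrite (klin0 (Ma_linr n)).
have pbal : forall (n : Mx) r (l : Defs.Hom A x y), P n -> P (Ma n (ifun i r)) ->
    Ma (Ma n (ifun i r)) l = Ma n (ila i x y r l).
  by move=> n r l h1 h2; rewrite MaA.
move=> Lf; split; [|split].
- move=> t u; exact: (tlift_add (D:=DP P) (V:=Mc M x y) pDl pDr p0l p0r pbal).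
- move=> n l hn; exact: (tlift_mul (D:=DP P) (V:=Mc M x y) pDl pDr p0l p0r pbal (n:=n) l hn).
- exact: (tlift_zero (D:=DP P) (V:=Mc M x y) pDl pDr p0l p0r pbal).
Qed.

Definition cnt (t : TF) : Mc M x y := counit k X B A i M sigma x y t.
Definition mu (t : TT y) : Mc M x y :=
  tlift (D:=tdRL Mx la) (Z:=of_lmod (Mc M x y)) (fun m a => Ma m a) t.
Definition incl (S : TG) : TT y := @mapT _ _ _ _ i x G Mx y gval S.
Definition psi (S : TG) : TF := tmap (D:=tdRL G la) (D':=DF) gval id S.
Definition psinv (t : TF) : TG := tmap (D:=DF) (D':=tdRL G la) (tosub GP_closed) id t.
Definition iota (t : TF) : TT y := tmap (D:=DF) (D':=tdRL Mx la) id id t.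

Lemma thom_psi : thom (D:=tdRL G la) (D':=DF) id gval id.
Proof.
split=> //.
by move=> n _; exact: (svalP n).
Qed.

Lemma thom_psinv : thom (D:=DF) (D':=tdRL G la) id (tosub GP_closed) id.
Proof.
split=> //.
- move=> n n' hn hn'; apply: sval_inj; rewrite svalD !tosubK //.
  exact: (cPD GP_closed).
- by move=> h0; apply: sval_inj; rewrite tosubK.
- move=> n r hn hnr; apply: sval_inj; rewrite tosubK //=.
  by rewrite tosubK.
Qed.

Lemma thom_iota : thom (D:=DF) (D':=tdRL Mx la) id id id.
Proof. by split. Qed.

Lemma gval_hom : rmod_hom (N:=G) (N':=Mx) gval.
Proof. exact: sval_hom. Qed.

Lemma F1 S : cnt (psi S) = mu (incl S).
Proof.
have [a1 [m1 z1]] := lift_props GP.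
have [a2 [m2 z2]] := lift_props (fun _ => True).
elim/TT_ind: S => [|n l|t u IH1 IH2].
- rewrite /cnt /psi /incl (mapT0 i y gval_hom) (tmap0 thom_psi).
  exact: (etrans z1 (esym z2)).
- rewrite /cnt /psi /incl (mapT_mul gval_hom) (tmapM thom_psi) //.
  rewrite /counit /mu; rewrite (m1 _ _ (svalP n)); exact: (esym (m2 _ _ I)).
- rewrite /cnt /psi /incl (mapT_add gval_hom) -/(tadd t u) (tmapD thom_psi).
  rewrite /counit /mu; rewrite (a1 _ _) (a2 _ _); congr (_ + _); [exact: IH1 | exact: IH2].
Qed.

Lemma F3 (t : TF) : sg (cnt t) = iota t.
Proof.
have [a1 [m1 z1]] := lift_props GP.
elim/tensor_ind: t => [|n l hn|t u IH1 IH2].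
- rewrite /cnt /counit /iota (tmap0 thom_iota).
  have -> : tlift (D:=DF) (Z:=of_lmod (Mc M x y)) (fun m0 a => Ma m0 a) (tzero DF) = 0 := z1.
  exact: (klin0 (@sg_lin y)).
- rewrite /cnt /counit /iota (tmapM thom_iota) //.
  have -> : tlift (D:=DF) (Z:=of_lmod (Mc M x y)) (fun m0 a => Ma m0 a) (tmul n l) = Ma n l
    := m1 n l hn.
  rewrite sg_i; move/GP_E: hn => ->; rewrite rmulT_mul Defs.comp1l //.
- rewrite /cnt /counit /iota (tmapD thom_iota).
  have -> : tlift (D:=DF) (Z:=of_lmod (Mc M x y)) (fun m0 a => Ma m0 a) (tadd t u) =
    tlift (D:=DF) (Z:=of_lmod (Mc M x y)) (fun m0 a => Ma m0 a) t +
    tlift (D:=DF) (Z:=of_lmod (Mc M x y)) (fun m0 a => Ma m0 a) u := a1 t u.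
  rewrite (klinD (@sg_lin y)); congr (_ + _); [exact: IH1 | exact: IH2].
Qed.

Lemma F4 (t : TF) : iota t = incl (psinv t).
Proof.
elim/tensor_ind: t => [|n l hn|t u IH1 IH2].
- by rewrite /iota /incl /psinv (tmap0 thom_iota) (tmap0 thom_psinv) (mapT0 i y gval_hom).
- rewrite /iota /incl /psinv (tmapM thom_iota) // (tmapM thom_psinv) //.
  by rewrite (mapT_mul gval_hom) /gval tosubK.
- rewrite /iota (tmapD thom_iota) -/(iota t) -/(iota u) IH1 IH2.
  rewrite /psinv (tmapD thom_psinv) -/(psinv t) -/(psinv u).
  exact: (esym (mapT_add gval_hom (psinv t) (psinv u))).
Qed.

Lemma F5 (t : TF) : psi (psinv t) = t.
Proof.
elim/tensor_ind: t => [|n l hn|t u IH1 IH2].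
- by rewrite /psi /psinv (tmap0 thom_psinv) (tmap0 thom_psi).
- by rewrite /psi /psinv (tmapM thom_psinv) // (tmapM thom_psi) // /gval tosubK.
- rewrite /psinv (tmapD thom_psinv) -/(psinv t) -/(psinv u) /psi (tmapD thom_psi).
  by rewrite -/(psi (psinv t)) -/(psi (psinv u)) IH1 IH2.
Qed.

Lemma incl_inj : injective incl.
Proof.
apply: (flat_inj hfl gval_hom); exact: sval_inj.
Qed.

Lemma sg_in_image (m : Mc M x y) : exists S : TG, incl S = sg m.
Proof.
have e := flat_exact hfl gval_hom dsig_hom G_exact.
apply/e; rewrite /dsig (mapT_sub (y:=y) sg_hom (uM_hom i Mx) dsig_hom).
by rewrite sg_ii subrr.
Qed.

Lemma counit_bij : bijective cnt.
Proof.
pose inv (m : Mc M x y) : TF := psi (proj1_sig (cid (sg_in_image m))).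
exists inv.
- move=> t; rewrite /inv; case: cid => S /= hS.
  have : incl S = incl (psinv t) by rewrite hS F3 F4.
  by move/incl_inj => ->; rewrite F5.
- move=> m; rewrite /inv; case: cid => S /= hS.
  by rewrite F1 hS; exact: sg_iii.
Qed.
End Y.
End Counit.

Lemma dir1_counit k (X : Type) (B : X -> kalg k) (A : kcat k X) (i : kXfunctor B A)
  (Hflat : forall x y, flat_left (ila i x y)) (M : rAmodule A)
  (sigma : forall x y : X, Mc M x y -> tensor (tdM i M x y)) :
  is_descent i M sigma -> counit_iso i M sigma.
Proof.
move=> Hd x y; exact: (counit_bij Hd (Hflat x y)).
Qed.

Section Dir2.
Variable k : comPzRingType.
Variables (X : Type) (B : X -> kalg k) (A : kcat k X) (i : kXfunctor B A).

Definition UPf x (V : rmodule (B x)) : Prop :=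
  injective (uM i (x:=x) (V:=V)) /\
  (forall t, dM (i:=i) (x:=x) (V:=V) t = 0 <-> exists n, uM i (x:=x) (V:=V) n = t).

Lemma UP_of (N : forall x, rmodule (B x)) x : unit_iso i N -> UPf (N x).
Proof.
move=> H; have [h1 h2] := H x; split; first exact: h1.
move=> t; rewrite -h2.
change (dM t = 0 <-> @mapT _ _ _ _ i x (N x) (TA i (N x)) x (uM i (V:=N x)) t =
        (@tmul _ (tdRL (TA i (N x)) (ila i x x)) t (idm A x))).
rewrite /dM; split=> h; last by rewrite h subrr.
by apply/eqP; rewrite -subr_eq0; apply/eqP.
Qed.

Definition fam x (V : rmodule (B x)) : forall y, rmodule (B y) :=
  fun y => match excluded_middle_informative (x = y) with
           | left e => eq_rect x (fun z => rmodule (B z)) V y e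
           | right _ => regmod (B y)
           end.

Lemma fam_x x (V : rmodule (B x)) : fam V x = V.
Proof.
rewrite /fam; case: excluded_middle_informative => // e.
by rewrite (proof_irrelevance _ e erefl).
Qed.

Lemma UP_all (Hu : forall N, unit_iso i N) x (V : rmodule (B x)) : UPf V.
Proof. by have := UP_of x (Hu (fam V)); rewrite fam_x. Qed.

Section X.
Variable x : X.
Local Notation R := (B x).
Local Notation TT V := (@TTg _ _ _ _ i x V x).
Local Notation tm V n l := (@tmul _ (tdRL V (ila i x x)) n l : TT V).
Local Notation mT V W f t := (@mapT _ _ _ _ i x V W x f t).

Lemma mapT_comp' (U V W : rmodule R) (f : U -> V) (g : V -> W) (hf : rmod_hom f)
  (hg : rmod_hom g) (hgf : rmod_hom (fun u => g (f u))) t :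
  mT V W g (mT U V f t) = mT U W (fun u => g (f u)) t.
Proof.
elim/TT_ind: t => [|n l|t u IH1 IH2].
- by rewrite !(mapT0 i x).
- by rewrite !mapT_mul.
- by rewrite !mapT_add // IH1 IH2.
Qed.

Lemma mapT_ext' (U V : rmodule R) (f g : U -> V) (hf : rmod_hom f) (hg : rmod_hom g) t :
  f =1 g -> mT U V f t = mT U V g t.
Proof.
move=> e; elim/TT_ind: t => [|n l|t u IH1 IH2].
- by rewrite !(mapT0 i x).
- by rewrite !mapT_mul // e.
- by rewrite !mapT_add // IH1 IH2.
Qed.

Lemma mapT_hom (V W : rmodule R) (f : V -> W) (hf : rmod_hom f) :
  rmod_hom (N:=TA i V) (N':=TA i W) (fun t => mT V W f t).
Proof.
split; first exact: mapT_lin.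
by move=> t r; rewrite /= /TAact rmulT_mapT.
Qed.

Lemma comp_hom (U V W : rmodule R) (f : U -> V) (g : V -> W) :
  rmod_hom f -> rmod_hom g -> rmod_hom (fun u => g (f u)).
Proof.
case=> f1 f2 [g1 g2]; split; last by move=> n r; rewrite f2 g2.
by move=> c u v; rewrite f1 g1.
Qed.

Section Im.
Variables (N1 N2 : rmodule R) (f : N1 -> N2).
Hypothesis hf : rmod_hom f.
Definition Pim (w : N2) : Prop := exists u, f u = w.
Lemma Pim_closed : closedP Pim.
Proof.
case: hf => hl hr; split.
- by exists 0; rewrite (klin0 hl).
- by move=> a b [u <-] [v <-]; exists (u + v); rewrite (klinD hl).
- by move=> c a [u <-]; exists (c *: u); rewrite (klinZ hl).
- by move=> a r [u <-]; exists (rma u r); rewrite hr.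
Qed.
Definition Im := subm Pim_closed.
Definition fim (u : N1) : Im := tosub Pim_closed (f u).
Lemma fimK u : sval' (fim u) = f u.
Proof. by rewrite /fim tosubK //; exists u. Qed.
Lemma fim_hom : rmod_hom (N:=N1) (N':=Im) fim.
Proof.
case: hf => hl hr; split.
- by move=> c u v; apply: sval_inj; rewrite svalD svalZ !fimK hl.
- by move=> n r; apply: sval_inj; rewrite fimK /= fimK hr.
Qed.
Lemma jim_hom : rmod_hom (N:=Im) (N':=N2) (@sval' _ _ _ _ Pim_closed).
Proof. exact: sval_hom. Qed.
End Im.

Hypothesis Hflat : flat_left (ila i x x).
Hypothesis Hu : forall N, unit_iso i N.

Lemma dir2_ff : faithfully_flat_left (ila i x x).
Proof.
move=> N1 N2 N3 f g hf hg; split; first exact: Hflat.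
move=> hT v; split; last first.
- case=> u <-.
  have [inj3 _] := UP_all Hu N3.
  apply: inj3; rewrite /uM.
  have := (hT (mT N1 N2 f (tm N1 u (idm A x)))).2 (ex_intro _ _ erefl).
  change (mT N2 N3 g (mT N1 N2 f (tm N1 u (idm A x))) = 0 ->
          tm N3 (g (f u)) (idm A x) = tm N3 0 (idm A x)).
  by rewrite !mapT_mul // TT_mul0.
- move=> hv.
  have : mT N2 N3 g (tm N2 v (idm A x)) = 0 by rewrite mapT_mul // hv TT_mul0.
  move/(hT (tm N2 v (idm A x))) => [S hS].
  pose I := Im hf; pose j := @sval' _ _ _ _ (Pim_closed hf).
  pose S' := mT N1 I (fim hf) S.
  have hj : rmod_hom (N:=I) (N':=N2) j := jim_hom hf.
  have hfim : rmod_hom (N:=N1) (N':=I) (fim hf) := fim_hom hf.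
  have e1 : mT I N2 j S' = tm N2 v (idm A x).
    rewrite /S' (mapT_comp' hfim hj (comp_hom hfim hj)) -hS.
    by apply: mapT_ext' => // [|u]; [exact: (comp_hom hfim hj) | exact: fimK].
  have [injI exI] := UP_all Hu I.
  have [injN2 _] := UP_all Hu N2.
  have hPhi := mapT_hom hj.
  have injPhi : injective (fun T : TT (TA i I) => mT (TA i I) (TA i N2) (fun t => mT I N2 j t) T).
    apply: (flat_inj Hflat hPhi); apply: (flat_inj Hflat hj); exact: sval_inj.
  have hd : dM (i:=i) (x:=x) (V:=I) S' = 0.
    apply: injPhi; rewrite /= (mapT0 i x hPhi) /dM.
    rewrite (klinB (mapT_lin hPhi)) mapT_mul //.
    rewrite (mapT_comp' (uM_hom i I) hPhi (comp_hom (uM_hom i I) hPhi)).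
    have eext : mT I (TA i N2) (fun u => mT I N2 j (uM i (x:=x) (V:=I) u)) S' =
                mT I (TA i N2) (fun u => uM i (x:=x) (V:=N2) (j u)) S'.
      apply: (@mapT_ext' I (TA i N2)).
      + exact: (comp_hom (uM_hom i I) hPhi).
      + exact: (comp_hom hj (uM_hom i N2)).
      + by move=> u; rewrite /uM mapT_mul.
    rewrite eext.
    rewrite -(mapT_comp' hj (uM_hom i N2) (comp_hom hj (uM_hom i N2))) e1.
    rewrite mapT_mul; last exact: (uM_hom i N2).
    by rewrite /uM; exact: subrr.
  have [w hw] := (exI S').1 hd.
  have : j w = v.
    apply: injN2; rewrite /uM -e1 -hw.
    by rewrite mapT_mul.
  move=> <-; exact: (svalP w).
Qed.
End X.
End Dir2.

Theorem theorem2p5 (k : comPzRingType) (X : Type) (B : X -> kalg k)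
  (A : kcat k X) (i : kXfunctor B A)
  (Hflat : forall x y : X, flat_left (ila i x y)) :
  (forall x : X, faithfully_flat_left (ila i x x)) <->
  ((forall N : forall x : X, rmodule (B x), unit_iso i N) /\
   (forall (M : rAmodule A) (sigma : forall x y : X, Mc M x y -> tensor (tdM i M x y)),
      is_descent i M sigma -> counit_iso i M sigma)).
Proof.
split.
- move=> hff; split.
  + move=> N; exact: (dir1_unit hff N).
  + move=> M sigma Hd; exact: (dir1_counit Hflat Hd).
- case=> Hu _ x; exact: (dir2_ff (Hflat x x) Hu).
Qed.
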